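(* Let $\gamma>0$ and $\alpha=2/\gamma^2$. Then for all $z\in\mathbb{C}$ and $x\in\mathbb{R}$, $$\mathcal{A}^\gamma_{RBF}(z,x)=\exp\left(-\frac{z^2}{\gamma^2}\right)\mathcal{A}^\alpha_{SB}(z,x).$$
   Context: For $\alpha>0$, the Segal–Bargmann kernel is $\mathcal{A}^\alpha_{SB}(z,x)=\left(\frac{\alpha}{\pi}\right)^{1/4}\exp\left(-\frac{\alpha}{2}(z^2+x^2)+\sqrt2\,\alpha zx\right)$. The normalized weighted Hermite functions are $\psi_n^\alpha(x)=\left(\frac{\alpha}{\pi}\right)^{1/4}(2^nn!)^{-1/2}H_n(\sqrt\alpha\,x)e^{-\alpha x^2/2}$, $n\ge0$, where $H_n$ are the physicists' Hermite polynomials; they form an orthonormal basis of $L^2(\mathbb{R})$. For $\gamma>0$, $e_n^\gamma(z)=\sqrt{\frac{2^n}{\gamma^{2n}n!}}\,z^n\exp(-z^2/\gamma^2)$, and the RBF Segal–Bargmann kernel is $\mathcal{A}^\gamma_{RBF}(z,x)=\sum_{n=0}^\infty e_n^\gamma(z)\psi_n^{\alpha}(x)$ with $\alpha=2/\gamma^2$. *)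

(* Defs.v *)
From Stdlib Require Import Reals.
From Coquelicot Require Export Coquelicot.
Open Scope R_scope.

Definition cexp (z : C) : C :=
  (exp (Re z) * cos (Im z), exp (Re z) * sin (Im z)).

Fixpoint Cpow (z : C) (n : nat) : C :=
  match n with O => RtoC 1 | S m => Cmult z (Cpow z m) end.

(* physicists' Hermite polynomials: H_0 = 1, H_1 = 2x,
   H_{n+2} = 2x H_{n+1} - 2(n+1) H_n *)
Fixpoint hermite_aux (n : nat) (x : R) : R * R :=
  (* returns (H_n x, H_{n+1} x) *)
  match n with
  | O => (1, 2 * x)
  | S m => let (a, b) := hermite_aux m x in
           (b, 2 * x * b - 2 * INR (S m) * a)
  end.
Definition hermite (n : nat) (x : R) : R := fst (hermite_aux n x).

Definition psi (alpha : R) (n : nat) (x : R) : R :=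
  Rpower (alpha / PI) (1/4) / sqrt (2 ^ n * INR (Factorial.fact n))
  * hermite n (sqrt alpha * x) * exp (- alpha * x ^ 2 / 2).

Definition e_rbf (gamma : R) (n : nat) (z : C) : C :=
  Cmult (RtoC (sqrt (2 ^ n / (gamma ^ (2 * n) * INR (Factorial.fact n)))))
        (Cmult (Cpow z n) (cexp (Cdiv (Copp (Cmult z z)) (RtoC (gamma ^ 2))))).

Definition A_SB (alpha : R) (z : C) (x : R) : C :=
  Cmult (RtoC (Rpower (alpha / PI) (1/4)))
    (cexp (Cplus (Cmult (RtoC (- alpha / 2)) (Cplus (Cmult z z) (RtoC (x ^ 2))))
                 (Cmult (RtoC (sqrt 2 * alpha * x)) z))).

(* Main.v *)
Require Import Defs.
From Stdlib Require Import Reals.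
From Coquelicot Require Import Coquelicot.
Open Scope R_scope.
From Stdlib Require Import Lra Lia Psatz Factorial.
Notation fact := Factorial.fact.

Definition ha (t : R) (n : nat) := hermite n t / INR (fact n).

Lemma hermite_SS n t : hermite (S (S n)) t = 2*t*hermite (S n) t - 2*INR (S n)*hermite n t.
Proof.
  unfold hermite. simpl hermite_aux at 1 2. destruct (hermite_aux n t) as [a b]. simpl. reflexivity.
Qed.

Lemma ha_0 t : ha t 0 = 1.
Proof. unfold ha, hermite. simpl. field. Qed.
Lemma ha_1 t : ha t 1 = 2 * t.
Proof. unfold ha, hermite. simpl. field. Qed.

Lemma ha_rec t n : INR (S (S n)) * ha t (S (S n)) = 2*t*ha t (S n) - 2 * ha t n.
Proof.
  unfold ha. rewrite hermite_SS.
  replace (fact (S (S n))) with (S (S n) * (S n * fact n))%nat by (simpl; lia).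
  replace (fact (S n)) with (S n * fact n)%nat by (simpl; lia).
  rewrite !mult_INR. pose proof (INR_fact_neq_0 n).
  assert (INR (S n) <> 0) by (apply not_0_INR; lia).
  assert (INR (S (S n)) <> 0) by (apply not_0_INR; lia).
  field. auto.
Qed.

Lemma ha_bound t n :
  ha t n ^ 2 * INR (fact n) <= (8*t^2+9)^n /\
  ha t (S n) ^ 2 * INR (fact (S n)) <= (8*t^2+9)^(S n).
Proof.
  set (N := 8*t^2+9).
  induction n as [|n [IH1 IH2]].
  - rewrite ha_0, ha_1. simpl. unfold N. split; nra.
  - split; [exact IH2|].
    pose proof (ha_rec t n) as Hr.
    set (A := ha t (S n)) in *. set (B := ha t n) in *. set (x := ha t (S (S n))) in *.
    set (f := INR (fact n)) in *.
    assert (Hf : 0 < f) by (apply INR_fact_lt_0).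
    replace (fact (S n)) with (S n * fact n)%nat in IH2 by (simpl; lia).
    replace (fact (S (S n))) with (S (S n) * (S n * fact n))%nat by (simpl; lia).
    rewrite !mult_INR in *. fold f in IH2 |- *.
    rewrite !S_INR in *.
    pose proof (pos_INR n) as Hn.
    assert (HA : A^2 * f <= N^(S n)).
    { apply Rle_trans with (2 := IH2). assert (0 <= A^2*f) by (apply Rmult_le_pos; nra). nra. }
    assert (Hx : x^2 * ((INR n + 1 + 1) * ((INR n + 1) * f)) <= (2*t*A - 2*B)^2 * f).
    { rewrite <- Hr. assert (0 <= x^2*f) by (apply Rmult_le_pos; nra). assert (0 <= x^2*f*(INR n+1+1)) by (apply Rmult_le_pos; lra). nra. }
    assert (Hq : (2*t*A - 2*B)^2 <= 8*t^2*A^2 + 8*B^2) by (pose proof (pow2_ge_0 (2*t*A+2*B)); nra).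
    assert (HN : 9 <= N) by (unfold N; nra).
    assert (HNn : 0 < N^n) by (apply pow_lt; lra).
    simpl pow in HA, IH1 |- *.
    assert (H3 : (2*t*A - 2*B)^2 * f <= 8*t^2*(A^2*f) + 8*(B^2*f)) by nra.
    assert (H4 : 8*t^2*(A^2*f) <= 8*t^2*(N * N^n)).
    { apply Rmult_le_compat_l; [nra|]. simpl in HA. lra. }
    assert (H5 : 8*(B^2*f) <= 8 * N^n) by (simpl in IH1; lra).
    assert (H6 : 8*t^2*(N*N^n) + 8*N^n <= N * (N * N^n)).
    { assert (8*t^2 + 8/N <= N). { unfold N. assert (8/(8*t^2+9) <= 1). { apply Rle_trans with (8/9). apply Rmult_le_compat_l. lra. apply Rinv_le_contravar; nra. lra. } lra. }
      assert (8*t^2*N + 8 <= N*N). { replace 8 with (8/N * N) at 2 by (field; lra). nra. }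
      nra. }
    lra.
Qed.

Lemma ex_series_expo (y : R) : ex_series (fun n => y^n / INR (fact n)).
Proof.
  exists (exp y). pose proof (is_exp_Reals y) as H. unfold is_pseries in H.
  eapply is_series_ext; [|exact H]. intros n. simpl. rewrite pow_n_pow. unfold scal; simpl. unfold mult; simpl. unfold Rdiv. ring.
Qed.

Lemma ha_sum t rho : 0 <= rho -> ex_series (fun n => Rabs (ha t n) * rho^n).
Proof.
  intros Hr. set (N := 8*t^2+9).
  apply (@ex_series_le R_AbsRing R_CompleteNormedModule) with (b := fun n => ((2*N*rho^2)^n / INR (fact n) + (/2)^n) / 2).
  - intros n.
    change (norm (Rabs (ha t n) * rho ^ n)) with (Rabs (Rabs (ha t n) * rho ^ n)).
    rewrite Rabs_pos_eq.
    2:{ apply Rmult_le_pos. apply Rabs_pos. apply pow_le; lra. }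
    destruct (ha_bound t n) as [Hb _]. fold N in Hb.
    set (f := INR (fact n)) in *. assert (Hf : 0 < f) by apply INR_fact_lt_0.
    set (v := Rabs (ha t n) * rho ^ n).
    set (x := (2*N*rho^2)^n / f). set (y := (/2)^n).
    assert (Hv : 0 <= v) by (apply Rmult_le_pos; [apply Rabs_pos| apply pow_le; lra]).
    assert (Hx : 0 <= x) by (unfold x; apply Rdiv_le_0_compat; [apply pow_le; assert (0<N) by (unfold N; nra); nra | lra]).
    assert (Hy : 0 <= y) by (apply pow_le; lra).
    assert (Hxy : x * y = N^n * (rho^n)^2 / f).
    { unfold x, y. transitivity ((2*N*rho^2 * /2)^n / f). { rewrite (Rpow_mult_distr (2*N*rho^2) (/2)). unfold Rdiv. ring. }
      replace (2*N*rho^2 * /2) with (N*rho^2) by field. rewrite Rpow_mult_distr, <- !pow_mult, Nat.mul_comm. reflexivity. }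
    assert (Hv2 : v^2 <= x*y).
    { rewrite Hxy. unfold v. rewrite Rpow_mult_distr. rewrite pow2_abs.
      apply Rmult_le_reg_r with f; [lra|]. replace (N ^ n * (rho ^ n) ^ 2 / f * f) with (N ^ n * (rho ^ n) ^ 2) by (field; lra).
      assert (0 <= (rho^n)^2) by apply pow2_ge_0. nra. }
    assert (((x+y)/2)^2 >= x*y) by (pose proof (pow2_ge_0 (x-y)); nra).
    assert (0 <= (x+y)/2) by lra. nra.
  - apply ex_series_scal_r. apply (@ex_series_plus R_AbsRing R_NormedModule (fun n => (2*N*rho^2)^n / INR (fact n)) (fun n => (/2)^n)). apply ex_series_expo.
    apply ex_series_geom. rewrite Rabs_pos_eq; lra.
Qed.

Definition pw (wr wi : R) n := fst (Defs.Cpow (wr, wi) n).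
Definition qw (wr wi : R) n := snd (Defs.Cpow (wr, wi) n).
Lemma pw_S wr wi n : pw wr wi (S n) = wr * pw wr wi n - wi * qw wr wi n.
Proof. reflexivity. Qed.
Lemma qw_S wr wi n : qw wr wi (S n) = wr * qw wr wi n + wi * pw wr wi n.
Proof. reflexivity. Qed.
Lemma pw_0 wr wi : pw wr wi 0 = 1. Proof. reflexivity. Qed.
Lemma qw_0 wr wi : qw wr wi 0 = 0. Proof. reflexivity. Qed.

Lemma pw_bound wr wi n : Rabs (pw wr wi n) <= (Rabs wr + Rabs wi)^n /\ Rabs (qw wr wi n) <= (Rabs wr + Rabs wi)^n.
Proof.
  induction n as [|n [H1 H2]].
  - rewrite pw_0, qw_0, Rabs_R1, Rabs_R0. simpl. lra.
  - rewrite pw_S, qw_S. simpl pow.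
    pose proof (Rabs_pos wr). pose proof (Rabs_pos wi).
    split.
    + eapply Rle_trans. apply Rabs_triang. rewrite Rabs_Ropp, !Rabs_mult.
      pose proof (Rmult_le_compat_l _ _ _ H H1). pose proof (Rmult_le_compat_l _ _ _ H0 H2). lra.
    + eapply Rle_trans. apply Rabs_triang. rewrite !Rabs_mult.
      pose proof (Rmult_le_compat_l _ _ _ H H2). pose proof (Rmult_le_compat_l _ _ _ H0 H1). lra.
Qed.

Definition pc t wr wi n := ha t n * pw wr wi n.
Definition qc t wr wi n := ha t n * qw wr wi n.

Lemma radius_inf (a : nat -> R) (M : R) (HM : 0 <= M) :
  (forall n, Rabs (a n) <= M * 1) -> True. Proof. auto. Qed.

Lemma CV_gen (a b : nat -> R) m : 0 <= m -> (forall n, Rabs (a n) <= Rabs (b n) * m^n) ->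
  (forall rho, 0 <= rho -> ex_series (fun n => Rabs (b n) * rho^n)) ->
  forall s, Rbar_lt (Rabs s) (CV_radius a).
Proof.
  intros Hm Hab Hb s.
  assert (Hd : CV_disk a (Rabs s + 1)).
  { unfold CV_disk. apply (@ex_series_le R_AbsRing R_CompleteNormedModule) with (b := fun n => Rabs (b n) * (m * (Rabs s + 1))^n).
    - intros n. change (norm (Rabs (a n * (Rabs s + 1) ^ n))) with (Rabs (Rabs (a n * (Rabs s + 1) ^ n))).
      rewrite Rabs_Rabsolu, Rabs_mult, Rpow_mult_distr.
      rewrite (Rabs_pos_eq ((Rabs s + 1)^n)) by (apply pow_le; pose proof (Rabs_pos s); lra).
      rewrite <- Rmult_assoc. apply Rmult_le_compat_r. apply pow_le; pose proof (Rabs_pos s); lra. apply Hab.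
    - apply Hb. pose proof (Rabs_pos s). nra. }
  destruct (Lub_Rbar_correct (CV_disk a)) as [Hub _].
  apply Rbar_lt_le_trans with (Rabs s + 1). simpl. lra.
  apply Hub. exact Hd.
Qed.

Lemma pc_radius t wr wi s : Rbar_lt (Rabs s) (CV_radius (pc t wr wi)).
Proof.
  apply CV_gen with (b := ha t) (m := Rabs wr + Rabs wi).
  - pose proof (Rabs_pos wr); pose proof (Rabs_pos wi); lra.
  - intros n. unfold pc. rewrite Rabs_mult. apply Rmult_le_compat_l. apply Rabs_pos. apply pw_bound.
  - apply ha_sum.
Qed.
Lemma qc_radius t wr wi s : Rbar_lt (Rabs s) (CV_radius (qc t wr wi)).
Proof.
  apply CV_gen with (b := ha t) (m := Rabs wr + Rabs wi).
  - pose proof (Rabs_pos wr); pose proof (Rabs_pos wi); lra.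
  - intros n. unfold qc. rewrite Rabs_mult. apply Rmult_le_compat_l. apply Rabs_pos. apply pw_bound.
  - apply ha_sum.
Qed.

Lemma coef_p t wr wi n : INR (S n) * pc t wr wi (S n) =
  2*t*(wr * pc t wr wi n - wi * qc t wr wi n)
  - 2 * @PS_incr_1 R_AbsRing R_NormedModule (fun k => (wr^2-wi^2) * pc t wr wi k - (2*wr*wi) * qc t wr wi k) n.
Proof.
  unfold pc, qc. destruct n as [|k].
  - unfold PS_incr_1. rewrite ha_1, pw_S, ha_0, pw_0, qw_0. unfold zero; simpl. ring.
  - unfold PS_incr_1. rewrite <- Rmult_assoc, ha_rec. repeat (rewrite pw_S || rewrite qw_S). ring.
Qed.

Lemma coef_q t wr wi n : INR (S n) * qc t wr wi (S n) =
  2*t*(wr * qc t wr wi n + wi * pc t wr wi n)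
  - 2 * @PS_incr_1 R_AbsRing R_NormedModule (fun k => (wr^2-wi^2) * qc t wr wi k + (2*wr*wi) * pc t wr wi k) n.
Proof.
  unfold pc, qc. destruct n as [|k].
  - unfold PS_incr_1. rewrite ha_1, qw_S, ha_0, pw_0, qw_0. unfold zero; simpl. ring.
  - unfold PS_incr_1. rewrite <- Rmult_assoc, ha_rec. repeat (rewrite pw_S || rewrite qw_S). ring.
Qed.

Lemma is_pseries_lin (a b : nat -> R) s la lb al be :
  is_pseries a s la -> is_pseries b s lb ->
  is_pseries (fun n => al * a n + be * b n) s (al * la + be * lb).
Proof.
  intros Ha Hb.
  pose proof (is_pseries_plus _ _ _ _ _ (is_pseries_scal al _ _ _ (Rmult_comm _ _) Ha) (is_pseries_scal be _ _ _ (Rmult_comm _ _) Hb)) as H.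
  exact H.
Qed.

Lemma is_pseries_incr (a : nat -> R) s la :
  is_pseries a s la -> is_pseries (@PS_incr_1 R_AbsRing R_NormedModule a) s (s * la).
Proof. intros H. exact (is_pseries_incr_1 _ _ _ H). Qed.

Definition Pf t wr wi s := PSeries (pc t wr wi) s.
Definition Qf t wr wi s := PSeries (qc t wr wi) s.

Lemma Pf_correct t wr wi s : is_pseries (pc t wr wi) s (Pf t wr wi s).
Proof. apply PSeries_correct, CV_disk_correct, CV_disk_inside, pc_radius. Qed.
Lemma Qf_correct t wr wi s : is_pseries (qc t wr wi) s (Qf t wr wi s).
Proof. apply PSeries_correct, CV_disk_correct, CV_disk_inside, qc_radius. Qed.

Lemma P_deriv t wr wi s : is_derive (Pf t wr wi) s
  ((2*t*wr - 2*s*(wr^2-wi^2)) * Pf t wr wi s - (2*t*wi - 2*s*(2*wr*wi)) * Qf t wr wi s).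
Proof.
  pose proof (is_derive_PSeries _ s (pc_radius t wr wi s)) as Hd.
  pose proof (Pf_correct t wr wi s) as HP. pose proof (Qf_correct t wr wi s) as HQ.
  pose proof (is_pseries_lin _ _ s _ _ (2*t*wr) (-(2*t*wi)) HP HQ) as L1.
  pose proof (is_pseries_incr _ s _ (is_pseries_lin _ _ s _ _ (wr^2-wi^2) (-(2*wr*wi)) HP HQ)) as L2.
  pose proof (is_pseries_lin _ _ s _ _ 1 (-2) L1 L2) as L3.
  assert (E : PSeries (PS_derive (pc t wr wi)) s =
     1 * (2 * t * wr * Pf t wr wi s + - (2 * t * wi) * Qf t wr wi s) +
     -2 * (s * ((wr ^ 2 - wi ^ 2) * Pf t wr wi s + - (2 * wr * wi) * Qf t wr wi s))).
  { apply is_pseries_unique. eapply is_pseries_ext; [|exact L3].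
    intros n. unfold PS_derive. rewrite coef_p. unfold PS_incr_1. destruct n; try (unfold zero; simpl); ring. }
  match goal with |- is_derive ?f ?x ?v => replace v with (PSeries (PS_derive (pc t wr wi)) s) end;
    [exact Hd| rewrite E; ring].
Qed.

Lemma Q_deriv t wr wi s : is_derive (Qf t wr wi) s
  ((2*t*wr - 2*s*(wr^2-wi^2)) * Qf t wr wi s + (2*t*wi - 2*s*(2*wr*wi)) * Pf t wr wi s).
Proof.
  pose proof (is_derive_PSeries _ s (qc_radius t wr wi s)) as Hd.
  pose proof (Pf_correct t wr wi s) as HP. pose proof (Qf_correct t wr wi s) as HQ.
  pose proof (is_pseries_lin _ _ s _ _ (2*t*wr) (2*t*wi) HQ HP) as L1.
  pose proof (is_pseries_incr _ s _ (is_pseries_lin _ _ s _ _ (wr^2-wi^2) (2*wr*wi) HQ HP)) as L2.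
  pose proof (is_pseries_lin _ _ s _ _ 1 (-2) L1 L2) as L3.
  assert (E : PSeries (PS_derive (qc t wr wi)) s =
     1 * (2 * t * wr * Qf t wr wi s + (2 * t * wi) * Pf t wr wi s) +
     -2 * (s * ((wr ^ 2 - wi ^ 2) * Qf t wr wi s + (2 * wr * wi) * Pf t wr wi s))).
  { apply is_pseries_unique. eapply is_pseries_ext; [|exact L3].
    intros n. unfold PS_derive. rewrite coef_q. unfold PS_incr_1. destruct n; try (unfold zero; simpl); ring. }
  match goal with |- is_derive ?f ?x ?v => replace v with (PSeries (PS_derive (qc t wr wi)) s) end;
    [exact Hd| rewrite E; ring].
Qed.

Definition gr t wr wi s := 2*t*s*wr - s^2*(wr^2-wi^2).
Definition gi t wr wi s := 2*t*s*wi - s^2*(2*wr*wi).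
Definition Rf t wr wi s := exp (- gr t wr wi s) * cos (gi t wr wi s).
Definition Sf t wr wi s := - (exp (- gr t wr wi s) * sin (gi t wr wi s)).

Lemma is_derive_eqv (f : R -> R) x l l' : is_derive f x l -> l = l' -> is_derive f x l'.
Proof. intros H ->. exact H. Qed.

Lemma gr_deriv t wr wi s : is_derive (fun s => - gr t wr wi s) s (- (2*t*wr - 2*s*(wr^2-wi^2))).
Proof. unfold gr. auto_derive; [auto|ring]. Qed.
Lemma gi_deriv t wr wi s : is_derive (gi t wr wi) s (2*t*wi - 2*s*(2*wr*wi)).
Proof. unfold gi. auto_derive; [auto|ring]. Qed.

Lemma R_deriv t wr wi s : is_derive (Rf t wr wi) s
  (- ((2*t*wr - 2*s*(wr^2-wi^2)) * Rf t wr wi s - (2*t*wi - 2*s*(2*wr*wi)) * Sf t wr wi s)).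
Proof.
  pose proof (is_derive_comp exp _ s _ _ (is_derive_exp _) (gr_deriv t wr wi s)) as D1.
  pose proof (is_derive_comp cos _ s _ _ (is_derive_cos _) (gi_deriv t wr wi s)) as D2.
  pose proof (is_derive_mult _ _ _ _ _ D1 D2 (fun a b => Rmult_comm a b)) as D.
  eapply is_derive_eqv. exact D. unfold Rf, Sf. simpl. unfold scal; simpl. unfold mult, plus; simpl. ring.
Qed.
Lemma S_deriv t wr wi s : is_derive (Sf t wr wi) s
  (- ((2*t*wr - 2*s*(wr^2-wi^2)) * Sf t wr wi s + (2*t*wi - 2*s*(2*wr*wi)) * Rf t wr wi s)).
Proof.
  pose proof (is_derive_comp exp _ s _ _ (is_derive_exp _) (gr_deriv t wr wi s)) as D1.
  pose proof (is_derive_comp sin _ s _ _ (is_derive_sin _) (gi_deriv t wr wi s)) as D2.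
  pose proof (is_derive_opp _ _ _ (is_derive_mult _ _ _ _ _ D1 D2 (fun a b => Rmult_comm a b))) as D.
  eapply is_derive_eqv. exact D. unfold Rf, Sf. simpl. unfold scal, opp; simpl. unfold mult, plus, opp; simpl. ring.
Qed.

Lemma const_deriv (f : R -> R) : (forall s, is_derive f s 0) -> f 1 = f 0.
Proof.
  intros H. destruct (MVT_gen f 0 1 (fun _ => 0)) as [c [_ Hc]].
  - intros x _. apply H.
  - intros x _. apply continuity_pt_filterlim. apply (@ex_derive_continuous R_AbsRing R_NormedModule f x). exists 0. apply H.
  - lra.
Qed.

Lemma K_const t wr wi :
  Pf t wr wi 1 * Rf t wr wi 1 - Qf t wr wi 1 * Sf t wr wi 1 = 1 /\
  Pf t wr wi 1 * Sf t wr wi 1 + Qf t wr wi 1 * Rf t wr wi 1 = 0.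
Proof.
  assert (H0 : Pf t wr wi 0 = 1 /\ Qf t wr wi 0 = 0 /\ Rf t wr wi 0 = 1 /\ Sf t wr wi 0 = 0).
  { unfold Pf, Qf, Rf, Sf, gr, gi. rewrite !PSeries_0. unfold pc, qc. rewrite ha_0, pw_0, qw_0.
    replace (- (2 * t * 0 * wr - 0 ^ 2 * (wr ^ 2 - wi ^ 2))) with 0 by ring.
    replace (2 * t * 0 * wi - 0 ^ 2 * (2 * wr * wi)) with 0 by ring.
    rewrite exp_0, cos_0, sin_0. repeat split; ring. }
  destruct H0 as [P0 [Q0 [R0 S0]]].
  split.
  - rewrite (const_deriv (fun s => Pf t wr wi s * Rf t wr wi s - Qf t wr wi s * Sf t wr wi s)).
    + rewrite P0, Q0, R0, S0. ring.
    + intros s.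
      pose proof (is_derive_minus _ _ _ _ _ (is_derive_mult _ _ _ _ _ (P_deriv t wr wi s) (R_deriv t wr wi s) (fun a b => Rmult_comm a b))
          (is_derive_mult _ _ _ _ _ (Q_deriv t wr wi s) (S_deriv t wr wi s) (fun a b => Rmult_comm a b))) as D.
      eapply is_derive_eqv. exact D. unfold minus, plus, mult, opp; simpl. ring.
  - rewrite (const_deriv (fun s => Pf t wr wi s * Sf t wr wi s + Qf t wr wi s * Rf t wr wi s)).
    + rewrite P0, Q0, R0, S0. ring.
    + intros s.
      pose proof (is_derive_plus _ _ _ _ _ (is_derive_mult _ _ _ _ _ (P_deriv t wr wi s) (S_deriv t wr wi s) (fun a b => Rmult_comm a b))
          (is_derive_mult _ _ _ _ _ (Q_deriv t wr wi s) (R_deriv t wr wi s) (fun a b => Rmult_comm a b))) as D.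
      eapply is_derive_eqv. exact D. unfold minus, plus, mult, opp; simpl. ring.
Qed.
Lemma sum_n_fst (u : nat -> C) n : fst (sum_n u n) = sum_n (fun k => fst (u k)) n.
Proof. induction n. now rewrite !sum_O. rewrite !sum_Sn. rewrite <- IHn. reflexivity. Qed.
Lemma sum_n_snd (u : nat -> C) n : snd (sum_n u n) = sum_n (fun k => snd (u k)) n.
Proof. induction n. now rewrite !sum_O. rewrite !sum_Sn. rewrite <- IHn. reflexivity. Qed.
Lemma is_series_C (u : nat -> C) (l1 l2 : R) :
  is_series (fun n => fst (u n)) l1 -> is_series (fun n => snd (u n)) l2 ->
  is_series u (l1, l2).
Proof.
  unfold is_series. intros H1 H2.
  apply filterlim_locally. intros eps.
  pose proof (proj1 (filterlim_locally _ _) H1 eps) as [N1 G1].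
  pose proof (proj1 (filterlim_locally _ _) H2 eps) as [N2 G2].
  exists (max N1 N2). intros n Hn.
  split.
  - change (ball l1 eps (fst (sum_n u n))). rewrite sum_n_fst. apply G1. lia.
  - change (ball l2 eps (snd (sum_n u n))). rewrite sum_n_snd. apply G2. lia.
Qed.

Lemma PQ_val t wr wi :
  Pf t wr wi 1 = exp (gr t wr wi 1) * cos (gi t wr wi 1) /\
  Qf t wr wi 1 = exp (gr t wr wi 1) * sin (gi t wr wi 1).
Proof.
  destruct (K_const t wr wi) as [K1 K2]. unfold Rf, Sf in *.
  set (P := Pf t wr wi 1) in *. set (Q := Qf t wr wi 1) in *.
  set (c := cos (gi t wr wi 1)) in *. set (sn := sin (gi t wr wi 1)) in *.
  assert (HE : exp (- gr t wr wi 1) * exp (gr t wr wi 1) = 1).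
  { rewrite <- exp_plus. replace (- gr t wr wi 1 + gr t wr wi 1) with 0 by ring. apply exp_0. }
  set (e := exp (- gr t wr wi 1)) in *. set (E := exp (gr t wr wi 1)) in *.
  assert (Hcs : c^2 + sn^2 = 1) by (unfold c, sn; pose proof (sin2_cos2 (gi t wr wi 1)) as HH; unfold Rsqr in HH; nra).
  assert (H1 : P*e = c).
  { transitivity (c*(P*e*c + Q*e*sn) - sn*(-(P*e*sn) + Q*e*c)).
    - replace (P*e) with (P*e*(c^2+sn^2)) at 1 by (rewrite Hcs; ring). ring.
    - replace (P*e*c + Q*e*sn) with 1 by (rewrite <- K1; ring).
      replace (-(P*e*sn) + Q*e*c) with 0 by (rewrite <- K2; ring). ring. }
  assert (H2 : Q*e = sn).
  { transitivity (sn*(P*e*c + Q*e*sn) + c*(-(P*e*sn) + Q*e*c)).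
    - replace (Q*e) with (Q*e*(c^2+sn^2)) at 1 by (rewrite Hcs; ring). ring.
    - replace (P*e*c + Q*e*sn) with 1 by (rewrite <- K1; ring).
      replace (-(P*e*sn) + Q*e*c) with 0 by (rewrite <- K2; ring). ring. }
  split.
  - rewrite <- H1. transitivity (P * (e*E)). rewrite HE; ring. ring.
  - rewrite <- H2. transitivity (Q * (e*E)). rewrite HE; ring. ring.
Qed.

Lemma hermite_gen t wr wi :
  is_series (fun n => Cmult (RtoC (ha t n)) (Defs.Cpow (wr, wi) n))
    (exp (gr t wr wi 1) * cos (gi t wr wi 1), exp (gr t wr wi 1) * sin (gi t wr wi 1)).
Proof.
  destruct (PQ_val t wr wi) as [HP HQ]. rewrite <- HP, <- HQ.
  apply is_series_C.
  - pose proof (Pf_correct t wr wi 1) as H. unfold is_pseries in H.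
    eapply is_series_ext; [|exact H]. intros n. cbv beta. rewrite pow_n_pow, pow1.
    unfold scal; simpl. unfold mult; simpl. unfold pc, pw. unfold Cmult, RtoC; simpl. ring.
  - pose proof (Qf_correct t wr wi 1) as H. unfold is_pseries in H.
    eapply is_series_ext; [|exact H]. intros n. cbv beta. rewrite pow_n_pow, pow1.
    unfold scal; simpl. unfold mult; simpl. unfold qc, qw. unfold Cmult, RtoC; simpl. ring.
Qed.

Lemma Cpow_scal a u v n : Defs.Cpow (a*u, a*v) n = Cmult (RtoC (a^n)) (Defs.Cpow (u, v) n).
Proof.
  induction n.
  - simpl. unfold Cmult, RtoC; simpl. f_equal; ring.
  - change (Defs.Cpow (a*u, a*v) (S n)) with (Cmult (a*u, a*v) (Defs.Cpow (a*u, a*v) n)).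
    change (Defs.Cpow (u, v) (S n)) with (Cmult (u, v) (Defs.Cpow (u, v) n)).
    rewrite IHn. destruct (Defs.Cpow (u, v) n) as [p q]. unfold Cmult, RtoC; simpl. f_equal; ring.
Qed.

Lemma sq_lem gamma n : 0 < gamma ->
  sqrt (2 ^ n / (gamma ^ (2 * n) * INR (fact n))) = sqrt (2^n * INR (fact n)) / (INR (fact n) * gamma^n).
Proof.
  intros Hg. pose proof (INR_fact_lt_0 n) as Hf. pose proof (pow_lt gamma n Hg) as Hgn.
  pose proof (pow_lt 2 n ltac:(lra)) as H2.
  apply sqrt_lem_1.
  - apply Rlt_le, Rdiv_lt_0_compat; [lra|]. apply Rmult_lt_0_compat; [apply pow_lt; lra| lra].
  - apply Rlt_le, Rdiv_lt_0_compat; [apply sqrt_lt_R0; nra| nra].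
  - replace (gamma ^ (2*n)) with ((gamma^n)^2) by (rewrite <- pow_mult, Nat.mul_comm; reflexivity). replace (sqrt (2 ^ n * INR (fact n)) / (INR (fact n) * gamma ^ n) *
      (sqrt (2 ^ n * INR (fact n)) / (INR (fact n) * gamma ^ n))) with
     ((sqrt (2 ^ n * INR (fact n)) * sqrt (2 ^ n * INR (fact n))) / (INR (fact n) * gamma ^ n)^2) by (field; lra).
    rewrite sqrt_sqrt by nra. field. lra.
Qed.

Lemma cexp_eq (v : C) a g i : fst v = a + g -> snd v = i ->
  cexp v = (exp a * (exp g * cos i), exp a * (exp g * sin i)).
Proof. intros H1 H2. unfold cexp, Re, Im. rewrite H1, H2, exp_plus. f_equal; ring. Qed.

Theorem mainTheorem8 (gamma : R) (Hgamma : 0 < gamma) (z : C) (x : R) :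
  is_series (fun n : nat => Cmult (e_rbf gamma n z) (RtoC (psi (2 / gamma ^ 2) n x)))
    (Cmult (cexp (Cdiv (Copp (Cmult z z)) (RtoC (gamma ^ 2))))
           (A_SB (2 / gamma ^ 2) z x)).
Proof.
  destruct z as [zr zi].
  set (al := 2 / gamma ^ 2).
  set (t := sqrt al * x). set (wr := zr / gamma). set (wi := zi / gamma).
  set (Rp := Rpower (al / PI) (1/4)).
  set (K0 := Cmult (cexp (Cdiv (Copp (Cmult (zr, zi) (zr, zi))) (RtoC (gamma ^ 2))))
                   (RtoC (Rp * exp (- al * x ^ 2 / 2)))).
  assert (Hs : sqrt al = sqrt 2 / gamma).
  { unfold al. rewrite sqrt_div by (try lra; apply pow_lt; lra). f_equal.
    rewrite <- (sqrt_Rsqr gamma) at 2 by lra. unfold Rsqr. f_equal. ring. }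
  pose proof (is_series_scal K0 _ _ (hermite_gen t wr wi)) as H.
  assert (Hterm : forall n, Cmult (e_rbf gamma n (zr,zi)) (RtoC (psi al n x)) =
     scal K0 (Cmult (RtoC (ha t n)) (Defs.Cpow (wr,wi) n))).
  { intros n. unfold e_rbf, psi. fold Rp. change (sqrt al * x) with t.
    rewrite sq_lem by lra.
    replace (Defs.Cpow (zr,zi) n) with (Cmult (RtoC (gamma^n)) (Defs.Cpow (wr,wi) n)).
    2:{ rewrite <- Cpow_scal. replace (gamma*wr) with zr by (unfold wr; field; lra). replace (gamma*wi) with zi by (unfold wi; field; lra). reflexivity. }
    unfold K0. destruct (cexp (Cdiv (Copp (Cmult (zr, zi) (zr, zi))) (RtoC (gamma ^ 2)))) as [c1 c2].
    destruct (Defs.Cpow (wr,wi) n) as [p q].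
    pose proof (INR_fact_lt_0 n) as Hf. pose proof (pow_lt gamma n Hgamma) as Hgn.
    assert (HA : 0 < sqrt (2 ^ n * INR (fact n))) by (apply sqrt_lt_R0; pose proof (pow_lt 2 n ltac:(lra)); nra).
    unfold scal; simpl. unfold mult; simpl. unfold ha, Cmult, RtoC; simpl. f_equal; field; lra. }
  assert (Hval : Cmult (cexp (Cdiv (Copp (Cmult (zr, zi) (zr, zi))) (RtoC (gamma ^ 2)))) (A_SB al (zr,zi) x)
     = @scal C_Ring C_ModuleSpace K0 (exp (gr t wr wi 1) * cos (gi t wr wi 1), exp (gr t wr wi 1) * sin (gi t wr wi 1))).
  { unfold A_SB, K0. fold Rp.
    rewrite (cexp_eq (Cplus _ _) (- al * x^2/2) (gr t wr wi 1) (gi t wr wi 1)).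
    - destruct (cexp (Cdiv (Copp (Cmult (zr, zi) (zr, zi))) (RtoC (gamma ^ 2)))) as [c1 c2].
      unfold scal; simpl. unfold mult; simpl. unfold Cmult, RtoC; simpl. f_equal; ring.
    - unfold gr, t, wr, wi. rewrite Hs. unfold al. simpl. field. lra.
    - unfold gi, t, wr, wi. rewrite Hs. unfold al. simpl. field. lra. }
  rewrite Hval. eapply is_series_ext; [|exact H]. intros n. symmetry. apply Hterm.
Qed.
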